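(* For every integer $n\ge1$ and every $u\in V$, $\Pr(E_{4u})<\dfrac{3}{\ln(n+1)}$.
   Context: For an integer $n\ge1$, the $n$-octahedral graph $G'_n=(V,E')$ is the undirected graph with vertex set $V=\{u\in\mathbb{Z}^3:|u_1|+|u_2|+|u_3|=n\}$ and edge set $E'=\{\{v,w\}\subset V: v\neq w,\ |v_i-w_i|\le 1 \text{ for all } i=1,2,3\}$. For $u,v\in V$, $d_{uv}$ denotes the shortest-path distance in $G'_n$, and $Z_u=\left(\sum_{w\in V\setminus\{u\}} d_{uw}^{-2}\right)^{-1}$. The OSW random graph $G_n=(V,E)$ is the directed graph in which, for every $\{u,v\}\in E'$, both $(u,v),(v,u)\in E$, and in addition each vertex $u\in V$, independently of the others, chooses one vertex $v\in V\setminus\{u\}$ with probability $Z_u d_{uv}^{-2}$ and the long-range edge $(u,v)$ is added; $C_{uv}$ denotes the event that $u$ chooses $v$. For an ordered pair $(x,y)$ of distinct vertices, say $(x,y)$ is of type $s$ if $\{x,y\}\in E'$, and of type $w$ if $d_{xy}\ge2$ and $C_{xy}$ occurs. A C3 rooted at $u$ of type $(t_1,t_2,t_3)\in\{s,w\}^3$ is a triple $(u,a,b)$ of pairwise distinct vertices such that $(u,a)$ is of type $t_1$, $(a,b)$ is of type $t_2$ and $(b,u)$ is of type $t_3$. $E_{4u}$ is the event that there exists a C3 rooted at $u$ of type $(w,s,s)$. *)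

(* Defs.v *)
From HB Require Import structures.
From mathcomp Require Import all_boot all_order all_algebra.
From Stdlib Require Import Reals.

Set Implicit Arguments.
Unset Strict Implicit.
Unset Printing Implicit Defensive.

(* integer coordinate encoded by an ordinal i < 2n+1 : value i - n *)
Definition zc (n : nat) (i : 'I_(2 * n + 1)) : int := GRing.add (Posz i) (GRing.opp (Posz n)).

Definition triple (n : nat) : finType :=
  ('I_(2 * n + 1) * 'I_(2 * n + 1) * 'I_(2 * n + 1))%type.

Definition on_oct (n : nat) (x : triple n) : bool :=
  (absz (zc x.1.1) + absz (zc x.1.2) + absz (zc x.2) == n)%N.

(* V = { u in Z^3 : |u1|+|u2|+|u3| = n } (every such u has |u_i| <= n) *)
Definition vert (n : nat) : finType := {x : triple n | on_oct x}.

Definition c1 n (v : vert n) : int := zc (val v).1.1.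
Definition c2 n (v : vert n) : int := zc (val v).1.2.
Definition c3 n (v : vert n) : int := zc (val v).2.

Definition adj n (v w : vert n) : bool :=
  [&& v != w, (absz (GRing.add (c1 v) (GRing.opp (c1 w))) <= 1)%N, (absz (GRing.add (c2 v) (GRing.opp (c2 w))) <= 1)%N
    & (absz (GRing.add (c3 v) (GRing.opp (c3 w))) <= 1)%N].

Fixpoint walk n (k : nat) (v w : vert n) : bool :=
  match k with
  | 0 => v == w
  | k'.+1 => [exists x : vert n, adj v x && walk k' x w]
  end.

(* shortest-path distance: least k with a walk of length k
   (G'_n is connected, so the least k is < #|V|) *)
Definition dist n (v w : vert n) : nat :=
  find (fun k => walk k v w) (iota 0 #|vert n|).

Definition Rsum (T : finType) (P : pred T) (F : T -> R) : R :=
  \big[Rplus/R0]_(i : T | P i) F i.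
Definition Rprod (T : finType) (F : T -> R) : R :=
  \big[Rmult/R1]_(i : T) F i.

Definition Zu n (u : vert n) : R :=
  Rinv (Rsum (fun w => w != u) (fun w => Rinv (pow (INR (dist u w)) 2))).

Definition pchoose n (u v : vert n) : R :=
  if v == u then R0 else Rmult (Zu u) (Rinv (pow (INR (dist u v)) 2)).

(* Sample space: choice functions f (f u = the vertex chosen by u),
   with the product (independent) distribution. *)
Definition weight n (f : {ffun vert n -> vert n}) : R :=
  Rprod (fun u => pchoose u (f u)).

Definition Pr n (A : pred {ffun vert n -> vert n}) : R :=
  Rsum A (@weight n).

Definition type_s n (x y : vert n) : bool := adj x y.
Definition type_w n (f : {ffun vert n -> vert n}) (x y : vert n) : bool :=
  (x != y) && (2 <= dist x y)%N && (f x == y).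

Definition E4 n (u : vert n) : pred {ffun vert n -> vert n} :=
  fun f => [exists a : vert n, exists b : vert n,
    [&& u != a, u != b, a != b, type_w f u a, type_s a b & type_s b u]].

(* Main.v *)
Require Import Defs.
From HB Require Import structures.
From mathcomp Require Import all_boot all_order all_algebra.
From Stdlib Require Import Reals.
From mathcomp Require Import zify.
From Stdlib Require Import Lra.
Delimit Scope nat_scope with N.
Delimit Scope ring_scope with R.

Set Implicit Arguments.
Unset Strict Implicit.
Unset Printing Implicit Defensive.


Lemma RplusA' : associative Rplus.
Proof. by move=> x y z; rewrite Rplus_assoc. Qed.
Lemma RmultA' : associative Rmult.
Proof. by move=> x y z; rewrite Rmult_assoc. Qed.
HB.instance Definition _ := Monoid.isComLaw.Build R R0 Rplus RplusA' Rplus_comm Rplus_0_l.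
HB.instance Definition _ := Monoid.isComLaw.Build R R1 Rmult RmultA' Rmult_comm Rmult_1_l.
HB.instance Definition _ := Monoid.isMulLaw.Build R R0 Rmult Rmult_0_l Rmult_0_r.
HB.instance Definition _ := Monoid.isAddLaw.Build R Rmult Rplus Rmult_plus_distr_r Rmult_plus_distr_l.

Section RS.
Local Open Scope R_scope.

Lemma Rsum_le (T : finType) (P : pred T) (F G : T -> R) :
  (forall i, P i -> F i <= G i) -> Rsum P F <= Rsum P G.
Proof.
move=> H; rewrite /Rsum; apply: (big_ind2 (fun x y => x <= y)) => //.
- by apply: Rle_refl.
- by move=> ? ? ? ? ? ?; apply: Rplus_le_compat.
Qed.

Lemma Rsum_ge0 (T : finType) (P : pred T) (F : T -> R) :
  (forall i, P i -> 0 <= F i) -> 0 <= Rsum P F.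
Proof.
move=> H; rewrite /Rsum; apply: (big_ind (fun x => 0 <= x)) => //.
- by apply: Rle_refl.
- by move=> ? ? ? ?; lra.
Qed.

Lemma Rsum_mkcond (T : finType) (P : pred T) (F : T -> R) :
  Rsum P F = Rsum predT (fun i => if P i then F i else 0).
Proof. by rewrite /Rsum big_mkcond. Qed.

Lemma Rsum_sub (T : finType) (P Q : pred T) (F : T -> R) :
  (forall i, P i -> Q i) -> (forall i, Q i -> 0 <= F i) -> Rsum P F <= Rsum Q F.
Proof.
move=> PQ F0; rewrite (Rsum_mkcond P) (Rsum_mkcond Q); apply: Rsum_le => i _.
case: (boolP (P i)) => Pi; first by rewrite (PQ _ Pi); apply: Rle_refl.
by case: (boolP (Q i)) => Qi; [apply: F0 | apply: Rle_refl].
Qed.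

Lemma Rsum_const (T : finType) (P : pred T) (c : R) :
  Rsum P (fun _ => c) = INR #|P| * c.
Proof.
rewrite /Rsum big_const; elim: #|P| => [|k IH]; first by rewrite /=; lra.
by rewrite iterS IH S_INR; lra.
Qed.

Lemma Rsum_scal (T : finType) (P : pred T) (F : T -> R) c :
  Rsum P (fun i => c * F i) = c * Rsum P F.
Proof. by rewrite /Rsum big_distrr. Qed.

Lemma Rsum_split1 (T : finType) (P : pred T) (F : T -> R) x :
  P x -> Rsum P F = F x + Rsum (fun i => P i && (i != x)) F.
Proof. by move=> Px; rewrite /Rsum (bigD1 x). Qed.

End RS.


Section Geo.
Local Open Scope ring_scope.

Definition i0 : 'I_3 := @Ordinal 3 0 isT.
Definition i1 : 'I_3 := @Ordinal 3 1 isT.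
Definition i2 : 'I_3 := @Ordinal 3 2 isT.

Definition cv n (v : vert n) (i : 'I_3) : int :=
  if val i == 0%N then Defs.c1 v else if val i == 1%N then Defs.c2 v else Defs.c3 v.

Lemma cv0 n (v : vert n) : cv v i0 = Defs.c1 v. Proof. by []. Qed.
Lemma cv1 n (v : vert n) : cv v i1 = Defs.c2 v. Proof. by []. Qed.
Lemma cv2 n (v : vert n) : cv v i2 = Defs.c3 v. Proof. by []. Qed.

Lemma ord3 (i : 'I_3) : i = i0 \/ i = i1 \/ i = i2.
Proof.
case: i => [[|[|[|k]]] Hk].
- by left; apply: val_inj.
- by right; left; apply: val_inj.
- by right; right; apply: val_inj.
- by [].
Qed.

Lemma vsum n (v : vert n) : (absz (cv v i0) + absz (cv v i1) + absz (cv v i2) = n)%N.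
Proof. exact: (eqP (valP v)). Qed.

Lemma zc_inj n : injective (@zc n).
Proof. move=> i j; rewrite /zc => H; apply: val_inj => /=; lia. Qed.

Lemma vext n (v w : vert n) : (forall i, cv v i = cv w i) -> v = w.
Proof.
move=> H; have H0 := H i0; have H1 := H i1; have H2 := H i2.
rewrite /cv /= /Defs.c1 /Defs.c2 /Defs.c3 in H0 H1 H2.
apply: val_inj; move: H0 H1 H2; case: (val v) => [[a b] c]; case: (val w) => [[a' b'] c'] /=.
by move=> /zc_inj -> /zc_inj -> /zc_inj ->.
Qed.

Lemma pos21 n : (0 < 2 * n + 1)%N. Proof. by rewrite addn1. Qed.

Definition mkord n (z : int) : 'I_(2 * n + 1) :=
  Ordinal (ltn_pmod (absz (z + Posz n)) (pos21 n)).

Lemma zc_mkord n z : (absz z <= n)%N -> zc (mkord n z) = z.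
Proof.
move=> H; rewrite /zc /mkord /= modn_small; lia.
Qed.

Definition mkV n (d : vert n) (f : 'I_3 -> int) : vert n :=
  odflt d (insub ((mkord n (f i0), mkord n (f i1), mkord n (f i2)) : triple n)).

Lemma cv_mkV n (d : vert n) f :
  (absz (f i0) + absz (f i1) + absz (f i2) = n)%N -> forall i, cv (mkV d f) i = f i.
Proof.
move=> Hs.
have Px : on_oct ((mkord n (f i0), mkord n (f i1), mkord n (f i2)) : triple n).
  by rewrite /on_oct /= !zc_mkord //; [apply/eqP | lia | lia | lia].
move=> i; rewrite /mkV (insubT _ Px) /= /cv /Defs.c1 /Defs.c2 /Defs.c3 /=.
case: (ord3 i) => [->|[->|->]] /=; rewrite zc_mkord //; lia.
Qed.

Lemma adjE n (v w : vert n) : adj v w -> v != w /\ forall i, (absz (cv v i - cv w i) <= 1)%N.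
Proof.
case/and4P => H0 H1 H2 H3; split => // i.
by case: (ord3 i) => [->|[->|->]].
Qed.

Lemma adjI n (v w : vert n) : v != w -> (forall i, (absz (cv v i - cv w i) <= 1)%N) -> adj v w.
Proof. by move=> H0 H; apply/and4P; split => //; [apply: (H i0)|apply: (H i1)|apply: (H i2)]. Qed.

Lemma walk_snoc n k (v w x : vert n) : walk k v w -> adj w x -> walk k.+1 v x.
Proof.
elim: k v => [|k IH] v /=.
  by move=> /eqP -> Hwx; apply/existsP; exists x; rewrite Hwx eqxx.
case/existsP => y /andP [Hvy Hy] Hwx; apply/existsP; exists y.
by rewrite Hvy; exact: (IH _ Hy Hwx).
Qed.

Lemma dist_le n k (v w : vert n) : walk k v w -> (Defs.dist v w <= k)%N.
Proof.
move=> Hk; rewrite /Defs.dist.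
have [Hlt|] := ltnP k #|vert n|; last first.
  move=> Hle; apply: leq_trans Hle; rewrite -{2}(size_iota 0 #|vert n|); exact: find_size.
rewrite leqNgt; apply/negP => Hf.
have := before_find 0%N Hf; rewrite nth_iota // add0n.
by rewrite Hk.
Qed.

Lemma dist_pos n (v w : vert n) : v != w -> (0 < Defs.dist v w)%N.
Proof.
move=> Hvw; rewrite lt0n; apply/negP => /eqP H0.
have Hc : (0 < #|vert n|)%N by apply/card_gt0P; exists v.
have Hhas : has (fun k => walk k v w) (iota 0 #|vert n|) by rewrite has_find; move: (H0); rewrite /Defs.dist => ->; rewrite size_iota.
have := nth_find 0%N Hhas; rewrite -/(Defs.dist v w) H0 nth_iota // => /eqP E.
by rewrite E eqxx in Hvw.
Qed.

End Geo.

Module M3.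
Import Order.TTheory GRing.Theory Num.Theory.
Local Open Scope ring_scope.


Lemma perm3_all (p q h : 'I_3) : p != q -> p != h -> q != h ->
  forall i, i = p \/ i = q \/ i = h.
Proof.
move=> Hpq Hph Hqh i.
case: (ord3 p) Hpq Hph => [->|[->|->]]; case: (ord3 q) Hqh => [->|[->|->]];
 case: (ord3 h) => [->|[->|->]] //; case: (ord3 i) => [->|[->|->]]; tauto.
Qed.

Lemma perm3_sum (p q h : 'I_3) (g : 'I_3 -> nat) : p != q -> p != h -> q != h ->
  (g p + g q + g h = g i0 + g i1 + g i2)%N.
Proof.
move=> Hpq Hph Hqh.
case: (ord3 p) Hpq Hph => [->|[->|->]]; case: (ord3 q) Hqh => [->|[->|->]];
 case: (ord3 h) => [->|[->|->]] //; lia.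
Qed.

Lemma step_off (a b : int) k : (absz a + absz b = k.+1)%N ->
  exists a' b' : int, (absz a' + absz b' = k)%N /\ (absz (a - a') + absz (b - b') = 1)%N.
Proof.
move=> H.
have [Hb|Hb|Hb] := ltrgtP b (0:int).
- by exists a, (b + 1); lia.
- by exists a, (b - 1); lia.
- have [Ha|Ha|Ha] := ltrgtP a (0:int).
  + by exists (a + 1), b; lia.
  + by exists (a - 1), b; lia.
  + lia.
Qed.

Section Fam.
Local Open Scope ring_scope.
Variables (n : nat) (u : vert n) (p q h : 'I_3).
Hypotheses (Hpq : p != q) (Hph : p != h) (Hqh : q != h).
Hypothesis Hm : (0 < absz (cv u h))%N.

Lemma vsum3 (w : vert n) : (absz (cv w p) + absz (cv w q) + absz (cv w h) = n)%N.
Proof. by rewrite (perm3_sum (fun i => absz (cv w i)) Hpq Hph Hqh) vsum. Qed.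

Definition Hs (w : vert n) : bool :=
  if 0 < cv u h then 0 <= cv w h else cv w h <= 0.
Definition ell (w : vert n) : nat :=
  (absz (cv w p - cv u p) + absz (cv w q - cv u q))%N.

Definition hv (P Q : int) : int :=
  if 0 < cv u h then (Posz n - Posz (absz P) - Posz (absz Q)) else - (Posz n - Posz (absz P) - Posz (absz Q)).

Definition ptf (P Q : int) (i : 'I_3) : int :=
  if i == p then P else if i == q then Q else hv P Q.

Definition pt (P Q : int) : vert n := mkV u (ptf P Q).

Lemma pt_cv P Q : (absz P + absz Q <= n)%N ->
  [/\ cv (pt P Q) p = P, cv (pt P Q) q = Q & cv (pt P Q) h = hv P Q].
Proof.
move=> HPQ.
have Eqp : (q == p) = false by rewrite eq_sym (negbTE Hpq).
have Ehp : (h == p) = false by rewrite eq_sym (negbTE Hph).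
have Ehq : (h == q) = false by rewrite eq_sym (negbTE Hqh).
have Hs0 : (absz (ptf P Q i0) + absz (ptf P Q i1) + absz (ptf P Q i2) = n)%N.
  rewrite -(perm3_sum (fun i => absz (ptf P Q i)) Hpq Hph Hqh) /ptf eqxx Eqp Ehp Ehq.
  rewrite eqxx /hv; case: (0 < cv u h); lia.
rewrite /pt !(cv_mkV _ Hs0) /ptf eqxx Eqp Ehp Ehq eqxx.
by split.
Qed.

Lemma hv_sign P Q : (absz P + absz Q <= n)%N ->
  if 0 < cv u h then 0 <= hv P Q else hv P Q <= 0.
Proof. move=> H; rewrite /hv; case: (0 < cv u h); lia. Qed.

Lemma hv_lip P Q P' Q' :
  (absz (hv P Q - hv P' Q') <= absz (P - P') + absz (Q - Q'))%N.
Proof. rewrite /hv; case: (0 < cv u h); lia. Qed.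

Lemma Hs_u : Hs u.
Proof. rewrite /Hs; case: ifP => //; lia. Qed.

Lemma Hs_shape (w : vert n) : Hs w -> cv w h = hv (cv w p) (cv w q).
Proof.
rewrite /Hs /hv => H; have := vsum3 w; move: H; case: (0 < cv u h); lia.
Qed.

Lemma base (w : vert n) : Hs w -> ell w = 0%N -> w = u.
Proof.
move=> Hw Hl; have Hp : cv w p = cv u p by rewrite /ell in Hl; lia.
have Hq : cv w q = cv u q by rewrite /ell in Hl; lia.
apply: vext => i; case: (perm3_all Hpq Hph Hqh i) => [->|[->|->]] //.
by rewrite (Hs_shape Hw) (Hs_shape Hs_u) Hp Hq.
Qed.

Lemma step (w : vert n) k : Hs w -> ell w = k.+1 -> (k.+1 <= absz (cv u h))%N ->
  exists w', [/\ Hs w', ell w' = k & adj w' w].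
Proof.
move=> Hw Hl Hk.
have [a' [b' [H1 H2]]] := step_off Hl.
have Hu := vsum3 u.
have Hb : (absz (cv u p + a')%R + absz (cv u q + b')%R <= n)%N by lia.
have [E1 E2 E3] := pt_cv Hb.
have Hsw : Hs (pt (cv u p + a') (cv u q + b')).
  rewrite /Hs E3 /hv; case: (0 < cv u h); lia.
have Hlw : ell (pt (cv u p + a') (cv u q + b')) = k.
  by rewrite /ell E1 E2; lia.
exists (pt (cv u p + a') (cv u q + b')); split => //.
apply: adjI.
  by apply/eqP => E; move: Hlw; rewrite E Hl; lia.
have Hwh := Hs_shape Hw.
move=> i; case: (perm3_all Hpq Hph Hqh i) => [->|[->|->]].
- rewrite E1; rewrite /ell in Hl; lia.
- rewrite E2; rewrite /ell in Hl; lia.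
- rewrite E3 Hwh; apply: leq_trans (hv_lip _ _ _ _) _; lia.
Qed.

Lemma fam_walk k : forall w : vert n, Hs w -> ell w = k -> (k <= absz (cv u h))%N -> walk k u w.
Proof.
elim: k => [|k IH] w Hw Hl Hk.
  by rewrite (base Hw Hl) /= eqxx.
have [w' [Hw' Hl' Ha]] := step Hw Hl Hk.
apply: walk_snoc Ha; apply: IH => //; lia.
Qed.

Lemma fam_dist (w : vert n) : Hs w -> (ell w <= absz (cv u h))%N -> (Defs.dist u w <= ell w)%N.
Proof. by move=> Hw Hl; apply: dist_le; apply: fam_walk. Qed.

Definition ra k (r : 'I_4) (j : 'I_k) : int :=
  let x := (Posz k - Posz j) in let y := Posz j in
  if val r == 0%N then x else if val r == 1%N then - y else if val r == 2%N then - x else y.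
Definition rb k (r : 'I_4) (j : 'I_k) : int :=
  let x := (Posz k - Posz j) in let y := Posz j in
  if val r == 0%N then y else if val r == 1%N then x else if val r == 2%N then - y else - x.

Lemma rab_abs k r (j : 'I_k) : (absz (ra r j) + absz (rb r j) = k)%N.
Proof.
have Hj := ltn_ord j.
rewrite /ra /rb; case: r => [[|[|[|[|r]]]] Hr] //=; lia.
Qed.

Lemma rab_inj k r r' (j j' : 'I_k) : ra r j = ra r' j' -> rb r j = rb r' j' -> (r, j) = (r', j').
Proof.
have Hj := ltn_ord j; have Hj' := ltn_ord j'.
move=> E1 E2.
have Ej : val j = val j' /\ val r = val r'.
  move: E1 E2; rewrite /ra /rb.
  case: r => [[|[|[|[|r]]]] Hr] //=; case: r' => [[|[|[|[|r']]]] Hr'] //= ; lia.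
case: Ej => Ej Er.
by congr pair; apply: val_inj.
Qed.

Definition phi k (x : 'I_4 * 'I_k) : vert n :=
  pt (cv u p + ra x.1 x.2) (cv u q + rb x.1 x.2).

Lemma card_level k : (k <= absz (cv u h))%N ->
  (4 * k <= #|[pred w | Hs w && (ell w == k)]|)%N.
Proof.
move=> Hk.
have Hu := vsum3 u.
have Hb : forall x : 'I_4 * 'I_k,
   (absz (cv u p + ra x.1 x.2)%R + absz (cv u q + rb x.1 x.2)%R <= n)%N.
  by move=> [r j] /=; have := rab_abs r j; lia.
have Hinj : injective (@phi k).
  move=> [r j] [r' j']; rewrite /phi => E.
  have [A1 A2 _] := pt_cv (Hb (r, j)); have [B1 B2 _] := pt_cv (Hb (r', j')).
  have Ea : ra r j = ra r' j'.
    by move: (congr1 (fun v => cv v p) E) => /=; rewrite A1 B1 => /addrI.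
  have Eb : rb r j = rb r' j'.
    by move: (congr1 (fun v => cv v q) E) => /=; rewrite A2 B2 => /addrI.
  exact: rab_inj.
have -> : (4 * k = #|(@phi k) @: [set: 'I_4 * 'I_k]|)%N.
  by rewrite card_imset // cardsT card_prod !card_ord.
apply: subset_leq_card; apply/subsetP => w /imsetP [[r j] _ ->].
rewrite inE /=.
have [A1 A2 A3] := pt_cv (Hb (r, j)).
apply/andP; split.
  by rewrite /Hs /phi A3; apply: hv_sign.
have e1 : forall a x : int, a + x - a = x by move=> a x; rewrite addrC addKr.
by rewrite /ell /phi A1 A2 !e1 rab_abs eqxx.
Qed.

End Fam.

End M3.
Import M3.


Section Real.
Local Open Scope R_scope.

Lemma ln_le' x y : 0 < x -> x <= y -> ln x <= ln y.
Proof.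
move=> Hx Hxy; case: (Rle_lt_or_eq_dec _ _ Hxy) => H.
  by apply: Rlt_le; apply: ln_increasing.
by rewrite H; apply: Rle_refl.
Qed.

Lemma ln_step x : 0 < x -> ln (x + 1) <= ln x + / x.
Proof.
move=> Hx.
have He := exp_ineq1_le (/ x).
have Hix : 0 < / x by apply: Rinv_0_lt_compat.
have H1 : x + 1 <= x * exp (/ x).
  have : x * (1 + / x) <= x * exp (/ x) by apply: Rmult_le_compat_l; lra.
  by rewrite Rmult_plus_distr_l Rmult_1_r Rinv_r; lra.
apply: Rle_trans (ln_le' _ H1) _; first lra.
rewrite ln_mult //; last by apply: exp_pos.
by rewrite ln_exp; apply: Rle_refl.
Qed.

Definition harm (m : nat) : R :=
  \big[Rplus/R0]_(k < m.+1) (if (0 < k)%N then / INR k else 0).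

Lemma harm_ln m : ln (INR m + 1) <= harm m.
Proof.
elim: m => [|m IH].
  rewrite /harm big_ord_recr big_ord0 /= Rplus_0_l ln_1; lra.
rewrite /harm big_ord_recr -/(harm m).
have Hm : 0 < INR m + 1 by have := pos_INR m; lra.
have -> : INR (m.+1) = INR m + 1 by rewrite S_INR.
apply: Rle_trans (ln_step Hm) _.
apply: Rplus_le_compat => //; rewrite /= -S_INR; apply: Rle_refl.
Qed.

Lemma harm_ge0 m : 0 <= harm m.
Proof.
have := harm_ln m; have : 0 <= ln (INR m + 1).
  rewrite -ln_1; apply: ln_le'; first lra; have := pos_INR m; lra.
lra.
Qed.

End Real.


Definition gg n (u w : vert n) : R := Rinv (pow (INR (Defs.dist u w)) 2).
Definition Sig n (u : vert n) : R := Rsum (fun w => w != u) (gg u).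

Lemma neg_exists n (v : vert n) : (1 <= n)%N -> exists w : vert n, w != v.
Proof.
move=> Hn.
have Hs : (absz ((fun i => - cv v i)%R i0) + absz ((fun i => - cv v i)%R i1)
          + absz ((fun i => - cv v i)%R i2) = n)%N.
  by have := vsum v; rewrite /= !abszN.
exists (mkV v (fun i => - cv v i)%R); apply/eqP => E.
have := vsum v; have := @cv_mkV n v (fun i => (- cv v i)%R) Hs; rewrite E => H.
have := H i0; have := H i1; have := H i2; lia.
Qed.

Section Real2.
Local Open Scope R_scope.

Lemma gg_pos n (u w : vert n) : u != w -> 0 < gg u w.
Proof.
move=> H; have Hd := dist_pos H; rewrite /gg.
apply: Rinv_0_lt_compat; apply: pow_lt.
by apply: lt_0_INR; apply/ltP.
Qed.

Lemma gg_ge0 n (u w : vert n) : 0 <= gg u w.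
Proof.
rewrite /gg; have := pow_le (INR (Defs.dist u w)) 2 (pos_INR _).
case/Rle_lt_or_eq_dec => H.
  by apply: Rlt_le; apply: Rinv_0_lt_compat.
by rewrite -H Rinv_0; apply: Rle_refl.
Qed.

Lemma gg_lb n (u w : vert n) k : u != w -> (Defs.dist u w <= k)%N ->
  / (INR k ^ 2) <= gg u w.
Proof.
move=> H Hk; have Hd := dist_pos H; rewrite /gg.
apply: Rinv_le_contravar.
  by apply: pow_lt; apply: lt_0_INR; apply/ltP.
apply: pow_incr; split; first by apply: pos_INR.
by apply: le_INR; apply/leP.
Qed.

Lemma gg_ub4 n (u w : vert n) : (2 <= Defs.dist u w)%N -> gg u w <= / 4.
Proof.
move=> Hk; rewrite /gg.
apply: Rinv_le_contravar; first lra.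
have : INR 2 <= INR (Defs.dist u w) by apply: le_INR; apply/leP.
rewrite /= => H2; nra.
Qed.

Lemma Sig_pos n (v : vert n) : (1 <= n)%N -> 0 < Sig v.
Proof.
move=> Hn; have [w Hw] := neg_exists v Hn.
rewrite /Sig (@Rsum_split1 _ (fun i => i != v) (gg v) w Hw).
have H1 : 0 < gg v w by apply: gg_pos; rewrite eq_sym.
have H2 : 0 <= Rsum (fun i => (i != v) && (i != w)) (gg v) by apply: Rsum_ge0 => i _; apply: gg_ge0.
lra.
Qed.

Lemma Zu_Sig n (v : vert n) : Zu v = / Sig v.
Proof. by []. Qed.

Lemma pchoose_ge0 n (v x : vert n) : (1 <= n)%N -> 0 <= pchoose v x.
Proof.
move=> Hn; rewrite /pchoose; case: eqP => _; first by apply: Rle_refl.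
apply: Rmult_le_pos; last by apply: gg_ge0.
by apply: Rlt_le; apply: Rinv_0_lt_compat; apply: Sig_pos.
Qed.

Lemma sum_pchoose n (v : vert n) : (1 <= n)%N -> Rsum predT (pchoose v) = 1.
Proof.
move=> Hn.
have E : Rsum predT (pchoose v) = Rsum predT (fun x => if x != v then Zu v * gg v x else 0).
  by rewrite /Rsum; apply: eq_bigr => x _; rewrite /pchoose; case: eqP.
rewrite E -Rsum_mkcond Rsum_scal Zu_Sig -/(Sig v) Rinv_l //.
by have := Sig_pos v Hn; lra.
Qed.

Lemma weight_ge0 n (f : {ffun vert n -> vert n}) : (1 <= n)%N -> 0 <= weight f.
Proof.
move=> Hn; rewrite /weight /Rprod; apply: (big_ind (fun x => 0 <= x)).
- lra.
- by move=> x y Hx Hy; apply: Rmult_le_pos.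
- by move=> i _; apply: pchoose_ge0.
Qed.

Definition Sset n (u : vert n) : pred (vert n) :=
  fun a => [&& u != a, (2 <= Defs.dist u a)%N & [exists b, adj a b && adj b u]].

Lemma prob_bound n (u : vert n) : (1 <= n)%N -> Pr (E4 u) <= Rsum (Sset u) (pchoose u).
Proof.
move=> Hn.
pose F := fun (v x : vert n) => if v == u then (if Sset u x then pchoose u x else 0) else pchoose v x.
have Step1 : Pr (E4 u) <= Rsum (fun f : {ffun vert n -> vert n} => Sset u (f u)) (@weight n).
  apply: Rsum_sub; last by move=> f _; apply: weight_ge0.
  move=> f; rewrite /E4 /type_w => /existsP [a /existsP [b /and5P [Hua Hub Hab /andP [/andP [Hw1 Hw2] /eqP Hfa] /andP [Hs1 Hs2]]]].
  rewrite /Sset Hfa Hua Hw2 /=; apply/existsP; exists b; rewrite /type_s in Hs1 Hs2.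
  by rewrite Hs1 Hs2.
have Step2 : Rsum (fun f : {ffun vert n -> vert n} => Sset u (f u)) (@weight n)
   = Rsum predT (fun f : {ffun vert n -> vert n} => Rprod (fun v => F v (f v))).
  rewrite Rsum_mkcond /Rsum; apply: eq_bigr => f _.
  rewrite /weight /Rprod (bigD1 u) //= [in RHS](bigD1 u) //= /F eqxx.
  have -> : \big[Rmult/R1]_(i | i != u) (if i == u then (if Sset u (f i) then pchoose u (f i) else 0) else pchoose i (f i))
          = \big[Rmult/R1]_(i | i != u) pchoose i (f i).
    by apply: eq_bigr => i /negbTE ->.
  by case: (Sset u (f u)); rewrite ?Rmult_0_l.
have Step3 : Rsum predT (fun f : {ffun vert n -> vert n} => Rprod (fun v => F v (f v)))
   = Rprod (fun v => Rsum predT (F v)).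
  by rewrite /Rsum /Rprod (bigA_distr_bigA (fun v x => F v x)).
have Step4 : Rprod (fun v => Rsum predT (F v)) = Rsum (Sset u) (pchoose u).
  rewrite /Rprod (bigD1 u) //=.
  rewrite big1; last first.
    move=> v /negbTE Hv; rewrite /F.
    have -> : Rsum predT (fun x => if v == u then (if Sset u x then pchoose u x else 0) else pchoose v x)
          = Rsum predT (pchoose v) by rewrite /Rsum; apply: eq_bigr => x _; rewrite Hv.
    by apply: sum_pchoose.
  rewrite Rmult_1_r /F eqxx [in RHS]Rsum_mkcond.
  by [].
by rewrite -Step4 -Step3 -Step2.
Qed.

End Real2.

Module M6.
Import Order.TTheory GRing.Theory Num.Theory.


Section CardS.
Local Open Scope ring_scope.

Definition mk5 (z : int) : 'I_5 := Ordinal (ltn_pmod (absz (z + 2)) (isT : (0 < 5)%N)).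

Definition key5 n (u : vert n) (p q : 'I_3) (a : vert n) : 'I_5 * 'I_5 :=
  (mk5 (cv a p - cv u p), mk5 (cv a q - cv u q)).

Lemma SA_close n (u a : vert n) : (a == u) || Sset u a -> forall i, (absz (cv a i - cv u i) <= 2)%N.
Proof.
move=> /orP [/eqP -> i|].
  by rewrite subrr.
rewrite /Sset => /and3P [_ _ /existsP [b /andP [Hab Hbu]]] i.
have [_ H1] := adjE Hab; have [_ H2] := adjE Hbu.
have := H1 i; have := H2 i; lia.
Qed.

Lemma key5_inj n (u : vert n) (p q h : 'I_3) : p != q -> p != h -> q != h ->
  (3 <= absz (cv u h))%N -> forall a a', (a == u) || Sset u a -> (a' == u) || Sset u a' -> key5 u p q a = key5 u p q a' -> a = a'.
Proof.
move=> Hpq Hph Hqh H3 a a' Ha Ha' E.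
have Ep : (absz (cv a p - cv u p + 2)%R %% 5 = absz (cv a' p - cv u p + 2)%R %% 5)%N.
  by move: (congr1 (fun x => val x.1) E).
have Eq : (absz (cv a q - cv u q + 2)%R %% 5 = absz (cv a' q - cv u q + 2)%R %% 5)%N.
  by move: (congr1 (fun x => val x.2) E).
have Cp := SA_close Ha p; have Cp' := SA_close Ha' p.
have Cq := SA_close Ha q; have Cq' := SA_close Ha' q.
have Ch := SA_close Ha h; have Ch' := SA_close Ha' h.
rewrite !modn_small in Ep Eq; try lia.
have Xp : cv a p = cv a' p by clear -Ep Cp Cp'; lia.
have Xq : cv a q = cv a' q by clear -Eq Cq Cq'; lia.
have S1 := vsum3 Hpq Hph Hqh a; have S2 := vsum3 Hpq Hph Hqh a'.
have Habs : absz (cv a h) = absz (cv a' h).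
  by rewrite Xp Xq in S1; clear -S1 S2; lia.
have Xh : cv a h = cv a' h by clear -Habs Ch Ch' H3; lia.
apply: vext => i; case: (perm3_all Hpq Hph Hqh i) => [->|[->|->]] //.
Qed.

Lemma card_gen (T T' : finType) (P : pred T) (u : T) (key : T -> T') :
  ~~ P u -> (forall a a', (a == u) || P a -> (a' == u) || P a' -> key a = key a' -> a = a') ->
  (#|P|.+1 <= #|T'|)%N.
Proof.
move=> Hu H.
have Hinj : {in [predU1 u & P] &, injective key}.
  by move=> a a'; rewrite !inE; apply: H.
have := @leq_card_in _ _ key _ Hinj.
by rewrite cardU1 Hu.
Qed.

Lemma card_S n (u : vert n) (p q h : 'I_3) : p != q -> p != h -> q != h ->
  (3 <= absz (cv u h))%N -> (#|Sset u| <= 24)%N.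
Proof.
move=> Hpq Hph Hqh H3.
have H2 : ~~ Sset u u by rewrite /Sset eqxx.
have := @card_gen _ _ (Sset u) u (key5 u p q) H2 (key5_inj Hpq Hph Hqh H3).
by rewrite card_prod !card_ord.
Qed.

End CardS.

End M6.
Import M6.


Lemma card_simpl (T : finType) (P : pred T) : #|[pred w | P w]| = #|P|.
Proof. by apply: eq_card. Qed.

Section SigLB.
Local Open Scope R_scope.

Lemma Sig_lb n (u : vert n) (p q h : 'I_3) (Hpq : p != q) (Hph : p != h) (Hqh : q != h)
  (Hm : (0 < absz (cv u h))%N) : 4 * harm (absz (cv u h)) <= Sig u.
Proof.
set m := absz (cv u h).
pose A := fun w : vert n => [&& Hs u h w, (0 < ell u p q w)%N & (ell u p q w <= m)%N].
have ell_u : ell u p q u = 0%N by rewrite /ell !GRing.subrr.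
have S1 : Rsum A (gg u) <= Sig u.
  apply: Rsum_sub; last by move=> w _; apply: gg_ge0.
  move=> w /and3P [_ H1 _]; apply/eqP => E; move: H1; rewrite E ell_u.
  by [].
have S2 : Rsum A (fun w => / (INR (ell u p q w) ^ 2)) <= Rsum A (gg u).
  apply: Rsum_le => w /and3P [Hw H1 H2]; apply: gg_lb.
    by apply/eqP => E; move: H1; rewrite -E ell_u.
  exact: (fam_dist Hpq Hph Hqh Hm Hw H2).
have S3 : Rsum A (fun w => / (INR (ell u p q w) ^ 2)) =
   \big[Rplus/R0]_(k : 'I_m.+1 | (0 < k)%N)
      \big[Rplus/R0]_(w | A w && (inord (ell u p q w) == k)) / (INR (ell u p q w) ^ 2).
  rewrite /Rsum (partition_big (fun w => inord (ell u p q w) : 'I_m.+1) (fun k : 'I_m.+1 => (0 < k)%N)) //.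
  move=> w; rewrite /A => /and3P [_ H1 H2]; rewrite inordK // ltnS.
have S4 : forall k : 'I_m.+1, (0 < k)%N ->
   4 * / INR k <= \big[Rplus/R0]_(w | A w && (inord (ell u p q w) == k)) / (INR (ell u p q w) ^ 2).
  move=> k Hk.
  have E1 : \big[Rplus/R0]_(w | A w && (inord (ell u p q w) == k)) / (INR (ell u p q w) ^ 2)
      = Rsum (fun w => Hs u h w && (ell u p q w == k)) (fun _ => / (INR k ^ 2)).
    rewrite /Rsum; apply: eq_big.
      move=> w; rewrite /A /=; apply/idP/idP.
        case/andP => /and3P [Hw H1 H2] /eqP <-; rewrite inordK ?Hw ?eqxx //.
      case/andP => Hw /eqP Hl; rewrite Hw Hl Hk -ltnS (ltn_ord k) /=.
      by apply/eqP; apply: val_inj; rewrite /= inordK.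
    move=> w /andP [/and3P [Hw H1 H2] /eqP <-]; rewrite inordK //.
  rewrite E1 Rsum_const.
  have Hc := card_level Hpq Hph Hqh Hm (ltnSE (ltn_ord k)).
  rewrite (card_simpl (fun w => Hs u h w && (ell u p q w == k))) in Hc.
  have Hk0 : 0 < INR k by apply: lt_0_INR; apply/ltP.
  have HcR : INR (4 * k) <= INR #|(fun w => Hs u h w && (ell u p q w == k))|.
    by apply: le_INR; apply/leP.
  rewrite mult_INR in HcR.
  apply: Rle_trans (Rmult_le_compat_r _ _ _ _ HcR).
    right; simpl; field; lra.
  by apply: Rlt_le; apply: Rinv_0_lt_compat; apply: pow_lt.
have S5 : 4 * harm m = \big[Rplus/R0]_(k : 'I_m.+1 | (0 < k)%N) (4 * / INR k).
  by rewrite /harm big_distrr [RHS]big_mkcond; apply: eq_bigr => k _; case: ifP => _ /=; [| exact: Rmult_0_r].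
apply: Rle_trans S1; apply: Rle_trans S2; rewrite S3 S5.
by apply: (big_ind2 (fun x y => x <= y)) => //; [apply: Rle_refl | move=> *; apply: Rplus_le_compat].
Qed.

End SigLB.


Lemma card_pos_ex (T : finType) (P : pred T) : (0 < #|P|)%N -> exists x, P x.
Proof. by case/card_gt0P => x Hx; exists x. Qed.

Section Final.
Local Open Scope R_scope.

Lemma ln_pos x : 1 < x -> 0 < ln x.
Proof. by move=> H; rewrite -ln_1; apply: ln_increasing; lra. Qed.

Lemma exp3 : 7 < exp 3.
Proof.
have -> : 3 = 1 + 1 + 1 by lra.
rewrite !exp_plus; have := exp_ineq1_le 1 => H.
have H2 : 2 * 2 <= exp 1 * exp 1 by apply: Rmult_le_compat; lra.
have H3 : 2 * 2 * 2 <= exp 1 * exp 1 * exp 1 by apply: Rmult_le_compat; lra.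
lra.
Qed.

Lemma core n (u : vert n) (p q h : 'I_3) (Hpq : p != q) (Hph : p != h) (Hqh : q != h)
  (Hn : (1 <= n)%N) (H3 : (n <= 3 * absz (cv u h))%N) :
  Pr (E4 u) < IZR 3 / ln (INR n + 1).
Proof.
set m := absz (cv u h).
have Hm : (0 < m)%N by rewrite /m; lia.
have PB := prob_bound u Hn.
set T := Rsum (Sset u) (gg u).
have E1 : Rsum (Sset u) (pchoose u) = Zu u * T.
  rewrite /T -Rsum_scal /Rsum; apply: eq_bigr => a /and3P [Hua _ _].
  by rewrite /pchoose eq_sym (negbTE Hua).
have T0 : 0 <= T by apply: Rsum_ge0 => a _; apply: gg_ge0.
have Sp := Sig_pos u Hn.
have SLB := Sig_lb Hpq Hph Hqh Hm.
rewrite -/m in SLB.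
have HL := harm_ln m.
have Lpos : 0 < ln (INR n + 1).
  apply: ln_pos; have : 1 <= INR n by apply: (le_INR 1); apply/leP.
  lra.
have Pr1 : Pr (E4 u) <= T * / Sig u.
  by rewrite Rmult_comm -Zu_Sig -E1.
have [Hsmall|Hbig] := leqP n 6.
  have [w0 /andP [Hw0 /eqP Hl0]] : exists w, Hs u h w && (ell u p q w == 1%N).
    apply: card_pos_ex.
    have := card_level Hpq Hph Hqh Hm (Hm : (1 <= m)%N).
    rewrite (card_simpl (fun w => Hs u h w && (ell u p q w == 1%N))).
    by move=> H; apply: leq_trans H.
  have ell_u : ell u p q u = 0%N by rewrite /ell !GRing.subrr.
  have Hw0u : u != w0 by apply/eqP => E; move: Hl0; rewrite -E ell_u.
  have Hd0 : (Defs.dist u w0 <= 1)%N.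
    by have := fam_dist Hpq Hph Hqh Hm Hw0; rewrite Hl0 => H; apply: H.
  have NS : ~~ Sset u w0 by rewrite /Sset; apply/negP => /and3P [_ H _]; lia.
  have G0 := gg_pos Hw0u.
  have SS : gg u w0 + T <= Sig u.
    rewrite /Sig.
    apply: Rle_trans (Rsum_sub (P := fun w => (w == w0) || Sset u w) _ _).
    - rewrite (@Rsum_split1 _ (fun w => (w == w0) || Sset u w) (gg u) w0); last by rewrite eqxx.
      apply: Rplus_le_compat_l; right; rewrite /T /Rsum; apply: eq_bigl => w.
      case: eqP => [->|_] /=; last by rewrite andbT.
      by rewrite (negbTE NS).
    - move=> w /orP [/eqP ->|]; first by rewrite eq_sym.
      by rewrite /Sset => /and3P [H _ _]; rewrite eq_sym.
    - by move=> w _; apply: gg_ge0.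
  have Hlt1 : T * / Sig u < 1.
    rewrite -(Rinv_r (Sig u)); last lra.
    apply: Rmult_lt_compat_r; first by apply: Rinv_0_lt_compat.
    lra.
  have L3 : ln (INR n + 1) < 3.
    rewrite -(ln_exp 3); apply: ln_increasing; first by have := pos_INR n; lra.
    have : INR n <= INR 6 by apply: le_INR; apply/leP.
    have := exp3; rewrite /= => *; lra.
  have : 1 < IZR 3 / ln (INR n + 1).
    apply: (Rmult_lt_reg_r (ln (INR n + 1))) => //.
    have -> : IZR 3 / ln (INR n + 1) * ln (INR n + 1) = 3 by field; lra.
    lra.
  lra.
have Hm3 : (3 <= m)%N by rewrite /m; lia.
have CS := card_S Hpq Hph Hqh Hm3.
have T6 : T <= 6.
  apply: Rle_trans (_ : Rsum (Sset u) (fun _ => / 4) <= 6).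
    by apply: Rsum_le => a /and3P [_ H _]; apply: gg_ub4.
  rewrite Rsum_const.
  have : INR #|Sset u| <= INR 24 by apply: le_INR; apply/leP.
  rewrite /= => *; lra.
set a := ln (INR m + 1).
have Apos : 0 < a.
  apply: ln_pos; have : 1 <= INR m by apply: (le_INR 1); apply/leP.
  lra.
have L2 : ln (INR n + 1) < 2 * a.
  have Hlt : (n.+1 < m.+1 * m.+1)%N by nia.
  have : INR n.+1 < INR (m.+1 * m.+1) by apply: lt_INR; apply/ltP.
  rewrite mult_INR !S_INR => HH.
  rewrite /a; have -> : 2 * ln (INR m + 1) = ln ((INR m + 1) * (INR m + 1)).
    rewrite ln_mult; first lra.
    - by have := pos_INR m; lra.
    - by have := pos_INR m; lra.
  apply: ln_increasing => //; have := pos_INR n; lra.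
have IS : / Sig u <= / (4 * a).
  apply: Rinv_le_contravar; first lra.
  apply: Rle_trans SLB; apply: Rmult_le_compat_l; [lra | exact: HL].
have ISp : 0 < / Sig u by apply: Rinv_0_lt_compat.
have Pr2 : Pr (E4 u) <= 6 * / (4 * a).
  apply: Rle_trans Pr1 _; apply: Rmult_le_compat => //; lra.
have IL : / (2 * a) < / ln (INR n + 1).
  apply: Rinv_lt_contravar => //; apply: Rmult_lt_0_compat => //; lra.
have E6 : 6 * / (4 * a) = 3 * / (2 * a) by field; lra.
rewrite E6 in Pr2; rewrite /Rdiv; lra.
Qed.

End Final.

Theorem lemma8 (n : nat) (hn : (1 <= n)%N) (u : vert n) :
  Rlt (Pr (E4 u)) (Rdiv (IZR 3) (ln (Rplus (INR n) R1))).
Proof.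
have [H|[H|H]] : (n <= 3 * absz (cv u i0))%N \/ (n <= 3 * absz (cv u i1))%N \/ (n <= 3 * absz (cv u i2))%N.
  by have := vsum u; lia.
- exact: (@core n u i1 i2 i0 isT isT isT hn H).
- exact: (@core n u i0 i2 i1 isT isT isT hn H).
- exact: (@core n u i0 i1 i2 isT isT isT hn H).
Qed.
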